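(* Let $\alpha>0$, $\gamma<0$, $\theta=(\alpha,-(\alpha+\gamma)/4,\gamma)$, and let $R$ be a representation of $\mathbf{Q}$ with dimension vector $(1,4,1)$ that is $\theta$-stable. If $R$ is not globally injective, then $\gamma<-\alpha$. If $R$ is not globally surjective, then $\gamma>-\alpha$.
   Context: The quiver $\mathbf{Q}$ has vertices $-1,0,1$, arrows $\eta_0,\dots,\eta_3:-1\to0$, $\phi_0,\dots,\phi_3:0\to1$ and relations $\phi_i\eta_j+\phi_j\eta_i=0$; a representation consists of vector spaces $V_{-1},V_0,V_1$ and linear maps $f_i:V_{-1}\to V_0$, $g_i:V_0\to V_1$ with $g_if_j+g_jf_i=0$. $R$ is globally injective (resp. surjective) if $\sum\lambda_if_i$ is injective (resp. $\sum\lambda_ig_i$ surjective) for all $\lambda\in\mathbb{C}^4\setminus\{0\}$. $R$ is $\theta$-stable if $\theta\cdot\dim R=0$ and $\theta\cdot\dim S<0$ for every nonzero proper subrepresentation $S$. *)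

(* Defs.v *)
From HB Require Import structures.
From mathcomp Require Import all_boot all_order all_algebra.
From mathcomp Require Import complex.
From mathcomp Require Import reals.
Set Implicit Arguments. Unset Strict Implicit. Unset Printing Implicit Defensive.
Import Order.TTheory GRing.Theory Num.Theory.
Local Open Scope ring_scope.

(* A representation of Q with dimension vector (1,4,1), in coordinates:
   V_{-1} = K^1, V_0 = K^4, V_1 = K^1 (row vectors, maps act on the right:
   x |-> x *m f i).  f i : V_{-1} -> V_0, g i : V_0 -> V_1. *)
Record rep141 (K : fieldType) := Rep141 {
  rf : 'I_4 -> 'M[K]_(1, 4);
  rg : 'I_4 -> 'M[K]_(4, 1) }.

(* relations g_i f_j + g_j f_i = 0 (composition "g_i after f_j" is f j *m g i) *)
Definition rep_relations (K : fieldType) (Rp : rep141 K) : Prop :=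
  forall i j : 'I_4, rf Rp j *m rg Rp i + rf Rp i *m rg Rp j = 0.

Definition fsum (K : fieldType) (Rp : rep141 K) (l : 'rV[K]_4) : 'M[K]_(1, 4) :=
  \sum_(i < 4) l 0 i *: rf Rp i.
Definition gsum (K : fieldType) (Rp : rep141 K) (l : 'rV[K]_4) : 'M[K]_(4, 1) :=
  \sum_(i < 4) l 0 i *: rg Rp i.

Definition globally_injective (K : fieldType) (Rp : rep141 K) : Prop :=
  forall l : 'rV[K]_4, l != 0 -> row_free (fsum Rp l).
Definition globally_surjective (K : fieldType) (Rp : rep141 K) : Prop :=
  forall l : 'rV[K]_4, l != 0 -> row_full (gsum Rp l).

(* A subrepresentation: subspaces S_{-1} <= K^1, S_0 <= K^4, S_1 <= K^1
   (given as row spaces of square matrices) stable under all arrows. *)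
Definition is_subrep (K : fieldType) (Rp : rep141 K)
  (Sm : 'M[K]_1) (S0 : 'M[K]_4) (S1 : 'M[K]_1) : Prop :=
  forall i : 'I_4, (Sm *m rf Rp i <= S0)%MS /\ (S0 *m rg Rp i <= S1)%MS.

Definition theta_dot (R : numDomainType) (t : R * R * R) (a b c : nat) : R :=
  t.1.1 *+ a + t.1.2 *+ b + t.2 *+ c.

Definition theta_stable (R : numDomainType) (K : fieldType) (t : R * R * R)
  (Rp : rep141 K) : Prop :=
  theta_dot t 1 4 1 = 0 /\
  forall Sm S0 S1, is_subrep Rp Sm S0 S1 ->
    (\rank Sm + \rank S0 + \rank S1 != 0)%N ->
    ~~ [&& \rank Sm == 1, \rank S0 == 4 & \rank S1 == 1]%N ->
    theta_dot t (\rank Sm) (\rank S0) (\rank S1) < 0.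

(* Main.v *)
Require Import Defs.
From HB Require Import structures.
From mathcomp Require Import all_boot all_order all_algebra.
From mathcomp Require Import complex.
From mathcomp Require Import reals.
From mathcomp Require Import lra zify.
From Stdlib Require Import Classical.
Import Order.TTheory GRing.Theory Num.Theory.
Local Open Scope ring_scope.

Lemma rank_ker_pos (K : fieldType) (A : 'M[K]_4) (l : 'rV[K]_4) :
  l != 0 -> l *m A = 0 -> (\rank A <= 3)%N.
Proof.
move=> l0 lA.
have : (l <= kermx A)%MS by apply/sub_kermxP.
move/mxrankS; rewrite mxrank_ker.
have : (\rank l != 0)%N by rewrite mxrank_eq0.
have := rank_leq_col A. lia.
Qed.

Lemma rank11 (K : fieldType) m n (A : 'M[K]_(m, n)) :
  (m = 1 \/ n = 1)%N -> (\rank A != 1)%N -> A = 0.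
Proof.
move=> h r; apply/eqP; rewrite -mxrank_eq0.
have := rank_leq_row A; have := rank_leq_col A. lia.
Qed.

Theorem mainTheorem12 (R : realType) (alpha gamma : R)
  (Rp : rep141 (R[i])) :
  0 < alpha -> gamma < 0 ->
  rep_relations Rp ->
  theta_stable (alpha, - (alpha + gamma) / 4, gamma) Rp ->
  (~ globally_injective Rp -> gamma < - alpha) /\
  (~ globally_surjective Rp -> gamma > - alpha).
Proof.
move=> ha hg _ [_ st]; split => hn.
- have [l [l0 nf]] : exists l : 'rV_4, l != 0 /\ ~~ row_free (fsum Rp l).
    apply: NNPP => H; apply: hn => l l0.
    by apply/negPn/negP => nf; apply: H; exists l.
  have f0 : fsum Rp l = 0 by apply: (@rank11 _ 1 4); [by left|by []].
  pose F : 'M_4 := \matrix_(i, c) rf Rp i 0 c.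
  have lF : l *m F = 0.
    rewrite -f0; apply/matrixP => a c; rewrite !mxE /fsum summxE.
    by apply: eq_bigr => i _; rewrite !mxE (ord1 a).
  have rk := @rank_ker_pos _ F l l0 lF.
  have sub : is_subrep Rp 1%:M F 1%:M.
    move=> i; split; last exact: submx1.
    rewrite mul1mx; have -> : rf Rp i = row i F.
      by apply/matrixP => a c; rewrite !mxE (ord1 a).
    exact: row_sub.
  have := st _ _ _ sub; rewrite !mxrank1 /=.
  have -> : (\rank F == 4)%N = false by apply/negbTE; lia.
  move=> /(_ isT isT); rewrite /theta_dot /=.
  move: rk; set k := \rank F => rk.
  have hk : (k%:R <= 3 :> R) by rewrite (ler_nat R k 3).
  rewrite -mulr_natr => H.
  rewrite ltNge; apply/negP => H2.
  have : 0 <= alpha + gamma by lra.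
  nra.
- have [l [l0 nf]] : exists l : 'rV_4, l != 0 /\ ~~ row_full (gsum Rp l).
    apply: NNPP => H; apply: hn => l l0.
    by apply/negPn/negP => nf; apply: H; exists l.
  have g0 : gsum Rp l = 0 by apply: (@rank11 _ 4 1); [by right|by []].
  pose H : 'M_4 := \matrix_(i, c) rg Rp i c 0.
  have lH : l *m H = 0.
    apply/matrixP => a c; rewrite !mxE.
    transitivity ((gsum Rp l) c 0); last by rewrite g0 mxE.
    rewrite /gsum summxE; apply: eq_bigr => i _; by rewrite !mxE (ord1 a).
  have rk := @rank_ker_pos _ H l l0 lH.
  have sub : is_subrep Rp 0 (kermx H^T) 0.
    move=> i; split; first by rewrite mul0mx sub0mx.
    have -> : rg Rp i = H^T *m delta_mx i 0.
      by rewrite -colE; apply/matrixP => a c; rewrite !mxE (ord1 c).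
    by rewrite mulmxA mulmx_ker mul0mx sub0mx.
  have := st _ _ _ sub; rewrite !mxrank0 mxrank_ker mxrank_tr /=.
  move=> /(_ _ isT); rewrite /theta_dot /= !mulr0n add0r addr0.
  have hk : (0 < 4 - \rank H)%N by lia.
  move=> /(_ _) H1; have {H1} := H1 ltac:(lia).
  move: hk; set k := (4 - \rank H)%N => hk.
  rewrite -mulr_natr => H1.
  have hk' : (0 < k%:R :> R) by rewrite ltr0n.
  rewrite ltNge; apply/negP => H2.
  have : 0 <= - (alpha + gamma) / 4 by lra.
  nra.
Qed.
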